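(* Let $\theta>0$, $\lambda>0$, $\mu>0$ with $\lambda<\mu+1$. For $\alpha\ge 0$, $d\ge 0$ let $$\pi(\alpha,d)=(\theta+\mu)\alpha-\frac{\alpha^2}{2}-\frac{\alpha}{\alpha+d}\,\lambda\alpha\theta-d .$$ For $\alpha>0$ let $\Pi(\alpha;\theta)=\max_{d\ge 0}\pi(\alpha,d)$, and let $\alpha^*(\theta)$ denote the maximizer of $\Pi(\alpha;\theta)$ over $\alpha>0$, which equals $$\alpha^*(\theta)=\begin{cases}\mu+\theta(1-\lambda), & \lambda\theta\le 1,\\ \theta+\mu+1-2\sqrt{\lambda\theta}, & \lambda\theta>1.\end{cases}$$ Then $$\frac{\partial\alpha^*}{\partial\theta}=\begin{cases}1-\lambda, & \lambda\theta\le 1,\\ 1-\sqrt{\lambda/\theta}, & \lambda\theta>1.\end{cases}$$ If $\lambda>1$: (i) $\alpha^*$ is strictly decreasing in $\theta$ on $(0,\lambda)$; (ii) $\alpha^*$ is strictly increasing in $\theta$ on $(\lambda,\infty)$; (iii) the global minimum of $\alpha^*$ over $\theta>0$ equals $\mu+1-\lambda$ and is attained at $\theta=\lambda$. If $\lambda\le 1$: $\partial\alpha^*/\partial\theta\ge 0$ for all $\theta>0$.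
   Context: Model of a firm choosing AI deployment $\alpha\ge 0$ and security investment $d\ge 0$. $\theta$ is AI capability, $\lambda$ conditional breach-loss magnitude, $\mu$ complementary organizational readiness. Breach probability is $p(\alpha,d)=\alpha/(\alpha+d)$ (with convention $p(0,d)=0$), breach damage is $L(\alpha,\theta)=\lambda\alpha\theta$, and profit is productivity $(\theta+\mu)\alpha-\alpha^2/2$ minus expected loss $p\cdot L$ minus $d$. *)

(* Defs.v *)
From Stdlib Require Import Reals Lra.
From Coquelicot Require Import Coquelicot.
Open Scope R_scope.

Definition breach_prob (a d : R) : R :=
  if Req_EM_T a 0 then 0 else a / (a + d).

Definition profit (theta lam mu a d : R) : R :=
  (theta + mu) * a - a ^ 2 / 2 - breach_prob a d * (lam * a * theta) - d.

Definition is_max_on (S : R -> Prop) (f : R -> R) (v : R) : Prop :=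
  (exists x, S x /\ f x = v) /\ (forall x, S x -> f x <= v).

Definition is_Pi (theta lam mu a v : R) : Prop :=
  is_max_on (fun d => 0 <= d) (profit theta lam mu a) v.

Definition is_unique_argmax_Pi (theta lam mu a : R) : Prop :=
  0 < a /\
  exists v, is_Pi theta lam mu a v /\
    (forall b w, 0 < b -> is_Pi theta lam mu b w -> w <= v) /\
    (forall b w, 0 < b -> b <> a -> is_Pi theta lam mu b w -> w < v).

Definition alpha_star (lam mu theta : R) : R :=
  if Rle_dec (lam * theta) 1 then mu + theta * (1 - lam)
  else theta + mu + 1 - 2 * sqrt (lam * theta).

Definition alpha_star_deriv (lam theta : R) : R :=
  if Rle_dec (lam * theta) 1 then 1 - lam else 1 - sqrt (lam / theta).

(* Main.v *)
Require Import Defs.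
From Stdlib Require Import Reals Lra Psatz.
From Coquelicot Require Import Coquelicot.
Open Scope R_scope.

Lemma glue (f f1 f2 : R -> R) x l d0 : 0 < d0 ->
  (forall h, Rabs h < d0 -> f (x+h) = f1 (x+h) \/ f (x+h) = f2 (x+h)) ->
  f x = f1 x -> f x = f2 x ->
  derivable_pt_lim f1 x l -> derivable_pt_lim f2 x l -> derivable_pt_lim f x l.
Proof.
  intros Hd0 H H1 H2 D1 D2 eps Heps.
  destruct (D1 eps Heps) as [d1 P1]. destruct (D2 eps Heps) as [d2 P2].
  assert (Hp : 0 < Rmin d0 (Rmin d1 d2)).
  { apply Rmin_pos; [lra|apply Rmin_pos; apply cond_pos]. }
  exists (mkposreal _ Hp). simpl. intros h hn hh.
  assert (hA := Rmin_l d0 (Rmin d1 d2)). assert (hB := Rmin_r d0 (Rmin d1 d2)).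
  assert (hC := Rmin_l d1 d2). assert (hD := Rmin_r d1 d2).
  destruct (H h ltac:(lra)) as [E|E]; rewrite E.
  - rewrite H1. apply P1; auto. lra.
  - rewrite H2. apply P2; auto. lra.
Qed.

Definition f1 (lam mu t : R) := mu + t * (1 - lam).
Definition f2 (lam mu t : R) := t + mu + 1 - 2 * sqrt (lam * t).

Lemma sqrt_sq_div lam t : 0 < lam -> 0 < t -> lam / sqrt (lam * t) = sqrt (lam / t).
Proof.
  intros hl ht.
  assert (Hs : 0 < sqrt (lam * t)) by (apply sqrt_lt_R0; nra).
  assert (E : sqrt (lam / t) * sqrt (lam * t) = lam).
  { rewrite <- sqrt_mult_alt.
    - replace (lam / t * (lam * t)) with (lam * lam) by (field; lra).
      apply sqrt_square; lra.
    - apply Rlt_le, Rdiv_lt_0_compat; lra. }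
  apply (Rmult_eq_reg_r (sqrt (lam * t))); [|lra].
  unfold Rdiv. rewrite Rmult_assoc, Rinv_l by lra. lra.
Qed.

Lemma d_f1 lam mu t : derivable_pt_lim (f1 lam mu) t (1 - lam).
Proof.
  apply is_derive_Reals. unfold f1. auto_derive; auto. ring.
Qed.

Lemma d_f2 lam mu t : 0 < lam -> 0 < t ->
  derivable_pt_lim (f2 lam mu) t (1 - sqrt (lam / t)).
Proof.
  intros hl ht. apply is_derive_Reals. unfold f2. auto_derive.
  - nra.
  - rewrite <- sqrt_sq_div by lra.
    assert (0 < sqrt (lam * t)) by (apply sqrt_lt_R0; nra). field. lra.
Qed.

Lemma as_eq lam mu t : alpha_star lam mu t =
  if Rle_dec (lam * t) 1 then f1 lam mu t else f2 lam mu t.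
Proof. reflexivity. Qed.

Lemma f1_le_f2 lam mu t : 0 < lam -> 0 < t -> f1 lam mu t <= f2 lam mu t.
Proof.
  intros hl ht. unfold f1, f2.
  assert (Hs := sqrt_sqrt (lam*t) ltac:(nra)).
  assert (0 <= (1 - sqrt (lam*t))^2) by apply pow2_ge_0.
  nra.
Qed.

Lemma f2_sq lam mu t : 0 < lam -> 0 < t ->
  f2 lam mu t = (sqrt t - sqrt lam)^2 + mu + 1 - lam.
Proof.
  intros hl ht. unfold f2. rewrite sqrt_mult_alt by lra.
  assert (A := sqrt_sqrt t ltac:(lra)). assert (B := sqrt_sqrt lam ltac:(lra)).
  nra.
Qed.

Lemma deriv_all lam mu theta : 0 < lam -> 0 < theta ->
  is_derive (alpha_star lam mu) theta (alpha_star_deriv lam theta).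
Proof.
  intros hl ht. apply is_derive_Reals. unfold alpha_star_deriv.
  destruct (Rle_dec (lam * theta) 1) as [Hle|Hgt].
  - destruct (Req_dec (lam * theta) 1) as [Heq|Hlt].
    + assert (Hsq : sqrt (lam / theta) = lam).
      { replace (lam / theta) with (lam * lam).
        - apply sqrt_square; lra.
        - field_simplify_eq; nra. }
      apply (glue _ (f1 lam mu) (f2 lam mu) _ _ theta); auto.
      * intros h _. rewrite as_eq. destruct Rle_dec; auto.
      * rewrite as_eq. destruct Rle_dec; [reflexivity|lra].
      * rewrite as_eq. destruct Rle_dec; [|lra].
        unfold f1, f2. rewrite Heq, sqrt_1. assert (theta = 1 / lam) by (field_simplify_eq; lra).
        lra.
      * apply d_f1.
      * replace (1 - lam) with (1 - sqrt (lam / theta)) by (rewrite Hsq; ring).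
        apply d_f2; lra.
    + apply (glue _ (f1 lam mu) (f1 lam mu) _ _ ((1 - lam*theta)/lam)).
      * apply Rdiv_lt_0_compat; lra.
      * intros h Hh. left. rewrite as_eq. destruct Rle_dec as [|n]; auto.
        exfalso; apply n. apply Rabs_def2 in Hh. destruct Hh as [Hh _].
        apply (Rmult_lt_compat_l lam) in Hh; [|lra].
        replace (lam * ((1 - lam * theta) / lam)) with (1 - lam*theta) in Hh by (field; lra).
        nra.
      * rewrite as_eq. destruct Rle_dec; [reflexivity|lra].
      * rewrite as_eq. destruct Rle_dec; [reflexivity|lra].
      * apply d_f1.
      * apply d_f1.
  - assert (Hp : 0 < (lam*theta - 1)/lam) by (apply Rdiv_lt_0_compat; lra).
    apply (glue _ (f2 lam mu) (f2 lam mu) _ _ ((lam*theta - 1)/lam)); auto.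
    * intros h Hh. right. rewrite as_eq. destruct Rle_dec as [r|]; auto.
      exfalso. apply Rabs_def2 in Hh. destruct Hh as [_ Hh].
      apply (Rmult_lt_compat_l lam) in Hh; [|lra].
      replace (lam * - ((lam * theta - 1) / lam)) with (1 - lam*theta) in Hh by (field; lra).
      nra.
    * rewrite as_eq. destruct Rle_dec; [lra|reflexivity].
    * rewrite as_eq. destruct Rle_dec; [lra|reflexivity].
    * apply d_f2; lra.
    * apply d_f2; lra.
Qed.

Lemma as_pos lam mu theta : 0 < lam -> 0 < mu -> lam < mu + 1 -> 0 < theta ->
  0 < alpha_star lam mu theta.
Proof.
  intros hl hm hlm ht. rewrite as_eq. destruct Rle_dec as [r|r].
  - unfold f1. destruct (Rle_dec lam 1).
    + nra.
    + nra.
  - rewrite f2_sq by lra. assert (0 <= (sqrt theta - sqrt lam)^2) by apply pow2_ge_0. lra.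
Qed.

Lemma Pi_val theta lam mu a : 0 < lam -> 0 < theta -> 0 < a ->
  is_Pi theta lam mu a (a * alpha_star lam mu theta - a^2/2).
Proof.
  intros hl ht ha.
  assert (Hpr : forall d, 0 <= d -> profit theta lam mu a d =
     (theta + mu) * a - a ^ 2 / 2 - a / (a + d) * (lam * a * theta) - d).
  { intros d hd. unfold profit, breach_prob. destruct Req_EM_T; [lra|reflexivity]. }
  assert (Hq : forall d, 0 <= d -> a / (a + d) * (lam * a * theta) * (a + d) = a*a*(lam*theta)).
  { intros d hd. field. lra. }
  rewrite as_eq. split.
  - destruct Rle_dec as [r|r].
    + exists 0. split; [lra|]. rewrite Hpr by lra. unfold f1.
      replace (a / (a + 0) * (lam * a * theta)) with (a * (lam*theta)) by (field; lra). ring.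
    + set (s := sqrt (lam*theta)).
      assert (Hs : s * s = lam * theta) by (apply sqrt_sqrt; nra).
      assert (Hs1 : 1 < s).
      { destruct (Rle_lt_dec s 1); [|auto]. assert (0 <= s) by apply sqrt_pos. nra. }
      exists (a*(s-1)). split; [nra|]. rewrite Hpr by nra. unfold f2. fold s.
      replace (a + a * (s - 1)) with (a*s) by ring.
      replace (a / (a * s) * (lam * a * theta)) with (a * s) by (field_simplify_eq; [nra|lra]).
      ring.
  - intros d hd. rewrite Hpr by lra. specialize (Hq d hd).
    set (q := a / (a + d) * (lam * a * theta)) in *.
    destruct Rle_dec as [r|r]; unfold f1, f2.
    + assert (q + d >= a * (lam*theta)); [|nra].
      assert (E1 : (q + d - a*(lam*theta)) * (a + d) = d * (a*(1 - lam*theta) + d)) by nra.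
      assert (0 <= d * (a*(1 - lam*theta) + d)) by (apply Rmult_le_pos; nra).
      destruct (Rle_lt_dec 0 (q + d - a*(lam*theta))) as [h|h]; [lra|].
      assert ((q + d - a*(lam*theta)) * (a + d) < 0); [|lra].
      apply Rmult_neg_pos; lra.
    + set (s := sqrt (lam*theta)).
      assert (Hs : s * s = lam * theta) by (apply sqrt_sqrt; nra).
      assert (E2 : (q + (a+d) - 2*a*s) * (a + d) = (a*s - (a+d))^2) by nra.
      assert (0 <= (a*s - (a+d))^2) by apply pow2_ge_0.
      assert (0 <= q + (a+d) - 2*a*s).
      { destruct (Rle_lt_dec 0 (q + (a+d) - 2*a*s)) as [h|h]; auto.
        assert ((q + (a+d) - 2*a*s) * (a + d) < 0); [|lra].
        apply Rmult_neg_pos; lra. }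
      nra.
Qed.

Lemma Pi_unique theta lam mu a v w : is_Pi theta lam mu a v -> is_Pi theta lam mu a w -> v = w.
Proof.
  intros [[x [Hx Ex]] Hv] [[y [Hy Ey]] Hw].
  specialize (Hv y Hy). specialize (Hw x Hx). lra.
Qed.

Theorem proposition3 (lam mu : R) (hlam : 0 < lam) (hmu : 0 < mu)
    (hlm : lam < mu + 1) :
  (* alpha^*(theta) given by the closed form is the maximizer of Pi(.;theta) *)
  (forall theta, 0 < theta -> is_unique_argmax_Pi theta lam mu (alpha_star lam mu theta)) /\
  (* derivative formula *)
  (forall theta, 0 < theta ->
     is_derive (alpha_star lam mu) theta (alpha_star_deriv lam theta)) /\
  (* case lambda > 1 *)
  (1 < lam ->
     (forall t1 t2, 0 < t1 -> t1 < t2 -> t2 < lam ->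
        alpha_star lam mu t2 < alpha_star lam mu t1) /\
     (forall t1 t2, lam < t1 -> t1 < t2 ->
        alpha_star lam mu t1 < alpha_star lam mu t2) /\
     (forall theta, 0 < theta -> mu + 1 - lam <= alpha_star lam mu theta) /\
     alpha_star lam mu lam = mu + 1 - lam) /\
  (* case lambda <= 1 *)
  (lam <= 1 -> forall theta, 0 < theta ->
     forall l, is_derive (alpha_star lam mu) theta l -> 0 <= l).
Proof.
  split; [|split; [|split]].
  - intros theta ht. set (A := alpha_star lam mu theta).
    assert (HA : 0 < A) by (apply as_pos; auto).
    split; auto. exists (A * A - A^2/2). split.
    + apply Pi_val; auto.
    + split.
      * intros b w hb Hw. rewrite <- (Pi_unique _ _ _ _ _ _ (Pi_val theta lam mu b hlam ht hb) Hw).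
        fold A. assert (0 <= (A - b)^2) by apply pow2_ge_0. lra.
      * intros b w hb hne Hw. rewrite <- (Pi_unique _ _ _ _ _ _ (Pi_val theta lam mu b hlam ht hb) Hw).
        fold A. assert (0 < (A - b)^2). { apply pow2_gt_0. lra. } lra.
  - intros theta ht. apply deriv_all; auto.
  - intros Hl1.
    assert (Hsl : 1 < sqrt lam).
    { rewrite <- sqrt_1. apply sqrt_lt_1; lra. }
    assert (mono : forall t1 t2, 0 < t1 -> t1 < t2 -> sqrt t1 < sqrt t2).
    { intros. apply sqrt_lt_1; lra. }
    assert (Hb : 1 / lam < lam).
    { apply (Rmult_lt_reg_l lam); [lra|]. field_simplify; nra. }
    assert (f2dec : forall t1 t2, 0 < t1 -> t1 < t2 -> t2 <= lam -> f2 lam mu t2 < f2 lam mu t1).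
    { intros t1 t2 h1 h12 h2. rewrite !f2_sq by lra.
      assert (sqrt t2 <= sqrt lam).
      { destruct (Req_dec t2 lam); [subst; lra|]. left; apply mono; lra. }
      specialize (mono t1 t2 h1 h12). nra. }
    assert (f2inc : forall t1 t2, lam <= t1 -> t1 < t2 -> f2 lam mu t1 < f2 lam mu t2).
    { intros t1 t2 h1 h12. rewrite !f2_sq by lra.
      assert (sqrt lam <= sqrt t1).
      { destruct (Req_dec t1 lam); [subst; lra|]. left; apply mono; lra. }
      specialize (mono t1 t2 ltac:(lra) h12). nra. }
    assert (Hbnd : f1 lam mu (1/lam) = f2 lam mu (1/lam)).
    { unfold f1, f2. replace (lam * (1/lam)) with 1 by (field; lra). rewrite sqrt_1.
      field. lra. }
    split; [|split; [|split]].
    + intros t1 t2 h1 h12 h2. rewrite !as_eq.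
      destruct (Rle_dec (lam*t2) 1); destruct (Rle_dec (lam*t1) 1).
      * unfold f1. nra.
      * exfalso. nra.
      * assert (t1 <= 1/lam).
        { apply (Rmult_le_reg_l lam); [lra|]. field_simplify; lra. }
        assert (1/lam < t2).
        { apply (Rmult_lt_reg_l lam); [lra|]. field_simplify; lra. }
        assert (f1 lam mu (1/lam) <= f1 lam mu t1) by (unfold f1; nra).
        assert (f2 lam mu t2 < f2 lam mu (1/lam)).
        { apply f2dec; try lra; apply Rdiv_lt_0_compat; lra. }
        lra.
      * apply f2dec; lra.
    + intros t1 t2 h1 h12. rewrite !as_eq.
      destruct (Rle_dec (lam*t2) 1); [nra|]. destruct (Rle_dec (lam*t1) 1); [nra|].
      apply f2inc; lra.
    + intros theta ht. rewrite as_eq. destruct Rle_dec as [r|r].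
      * unfold f1. assert (theta <= 1/lam).
        { apply (Rmult_le_reg_l lam); [lra|]. field_simplify; lra. }
        assert (1/lam < 1).
        { apply (Rmult_lt_reg_l lam); [lra|]. field_simplify; lra. }
        assert ((1/lam) * (lam - 1) <= 1 * (lam - 1)).
        { apply Rmult_le_compat_r; lra. }
        assert (0 <= (1/lam - theta) * (lam - 1)) by (apply Rmult_le_pos; lra).
        lra.
      * rewrite f2_sq by lra. assert (0 <= (sqrt theta - sqrt lam)^2) by apply pow2_ge_0. lra.
    + rewrite as_eq. destruct Rle_dec; [nra|]. unfold f2.
      rewrite sqrt_square by lra. ring.
  - intros Hl1 theta ht l Hd.
    assert (E := is_derive_unique _ _ _ Hd).
    rewrite (is_derive_unique _ _ _ (deriv_all lam mu theta hlam ht)) in E.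
    subst l. unfold alpha_star_deriv. destruct Rle_dec as [r|r]; [lra|].
    assert (sqrt (lam/theta) <= 1); [|lra].
    rewrite <- sqrt_1. apply sqrt_le_1_alt.
    assert (lam / theta < 1); [|lra].
    apply (Rmult_lt_reg_r theta); [lra|]. field_simplify; nra.
Qed.
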